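(* Let $x\in\mathbb{R}^n$, $d_{\max}>0$, $\alpha>0$ and $\Lambda>0$. Let $\mathcal{D}=\{d_1,\ldots,d_p\}\subset\mathbb{R}^n$ be a $\Lambda$-positive spanning set for $B(x,\alpha)$ such that $\|d_i\|\le d_{\max}\alpha$ for all $i=1,\ldots,p$. Then $\operatorname{cm}(\mathcal{D})\ge \kappa$, where $\kappa:=\frac{1}{d_{\max}\Lambda}$.
   Context: $\|\cdot\|$ is the Euclidean norm and $B(y,r)=\{z\in\mathbb{R}^n:\|z-y\|\le r\}$. Given $x\in\mathbb{R}^n$, $\alpha>0$ and $\Lambda>0$, a set $\{d_1,\ldots,d_p\}\subset\mathbb{R}^n$ is a $\Lambda$-positive spanning set for $B(x,\alpha)$ if for every $v\in B(0,\alpha)$ there exists $c(v)\in\mathbb{R}^p$ with $c(v)\ge 0$ componentwise such that $v=\sum_{i=1}^p c_i(v)d_i$ and $\sum_{i=1}^p c_i(v)\le\Lambda$. The cosine measure of a finite set $\mathcal{D}\subset\mathbb{R}^n$ is $\operatorname{cm}(\mathcal{D}):=\min_{v\neq 0}\max_{d\in\mathcal{D},\, d\neq 0}\frac{d^Tv}{\|d\|\,\|v\|}$. *)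

(* Defs.v *)
From HB Require Import structures.
From mathcomp Require Import all_boot all_order all_algebra.
From mathcomp Require Import all_classical all_reals.
Set Implicit Arguments. Unset Strict Implicit. Unset Printing Implicit Defensive.
Import Order.TTheory GRing.Theory Num.Theory.
Local Open Scope ring_scope.
Local Open Scope classical_set_scope.

Definition dotp (R : realType) (n : nat) (u v : 'rV[R]_n) : R :=
  \sum_(i < n) u ord0 i * v ord0 i.

Definition enorm (R : realType) (n : nat) (v : 'rV[R]_n) : R :=
  Num.sqrt (dotp v v).

Definition Lambda_PSS (R : realType) (n p : nat) (d : 'I_p -> 'rV[R]_n)
    (x : 'rV[R]_n) (alpha Lambda : R) : Prop :=
  forall v : 'rV[R]_n, enorm v <= alpha ->
    exists c : 'I_p -> R,
      (forall i, 0 <= c i) /\ v = \sum_(i < p) c i *: d i /\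
      \sum_(i < p) c i <= Lambda.

Definition cosang (R : realType) (n : nat) (d v : 'rV[R]_n) : R :=
  dotp d v / (enorm d * enorm v).

(* cm(D) = min_{v<>0} max_{d in D, d<>0} d^T v / (|d| |v|); the min is
   attained, so it equals the infimum used here. *)
Definition cm (R : realType) (n p : nat) (d : 'I_p -> 'rV[R]_n) : R :=
  inf [set (\big[Num.max/-1]_(i < p | d i != 0) cosang (d i) v)
       | v in [set v : 'rV[R]_n | v != 0]].

(* Main.v *)
Require Import Defs.
From HB Require Import structures.
From mathcomp Require Import all_boot all_order all_algebra.
From mathcomp Require Import all_classical all_reals.
From mathcomp Require Import ring lra.
Import Order.TTheory GRing.Theory Num.Theory.
Local Open Scope ring_scope.

Section Aux.
Variables (R : realType) (n : nat).
Implicit Types (u v : 'rV[R]_n).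

Lemma dotpZl a u v : dotp (a *: u) v = a * dotp u v.
Proof. by rewrite /dotp mulr_sumr; apply: eq_bigr => i _; rewrite mxE mulrA. Qed.

Lemma dotpZr a u v : dotp u (a *: v) = a * dotp u v.
Proof.
by rewrite /dotp mulr_sumr; apply: eq_bigr => i _; rewrite mxE mulrCA.
Qed.

Lemma dotp0l v : dotp 0 v = 0.
Proof. by rewrite /dotp big1 // => i _; rewrite mxE mul0r. Qed.

Lemma dotp_suml p (F : 'I_p -> 'rV[R]_n) v :
  dotp (\sum_(i < p) F i) v = \sum_(i < p) dotp (F i) v.
Proof.
rewrite /dotp; under eq_bigr do rewrite summxE mulr_suml.
by rewrite exchange_big.
Qed.

Lemma dotp_ge0 v : 0 <= dotp v v.
Proof. by apply: sumr_ge0 => i _; rewrite -expr2 sqr_ge0. Qed.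

Lemma dotp_gt0 v : v != 0 -> 0 < dotp v v.
Proof.
move=> hv; rewrite lt_def dotp_ge0 andbT; apply/negP => /eqP h.
move/negP: hv; apply; apply/eqP/matrixP => i j.
rewrite ord1 mxE.
have hge : forall k : 'I_n, predT k -> 0 <= v ord0 k * v ord0 k.
  by move=> k _; rewrite -expr2 sqr_ge0.
have := @psumr_eq0P _ _ predT (fun k => v ord0 k * v ord0 k) hge h j isT.
by move=> /eqP; rewrite mulf_eq0 orbb => /eqP.
Qed.

Lemma enorm_gt0 v : v != 0 -> 0 < enorm v.
Proof. by move=> hv; rewrite /enorm sqrtr_gt0 dotp_gt0. Qed.

Lemma enorm_ge0 v : 0 <= enorm v.
Proof. exact: sqrtr_ge0. Qed.

Lemma enorm_sq v : enorm v ^+ 2 = dotp v v.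
Proof. by rewrite /enorm sqr_sqrtr // dotp_ge0. Qed.

Lemma enormZ a v : enorm (a *: v) = `|a| * enorm v.
Proof.
rewrite /enorm dotpZl dotpZr mulrA -expr2 sqrtrM ?sqr_ge0 //.
by rewrite sqrtr_sqr.
Qed.

End Aux.

Theorem lemma3p2 (R : realType) (n p : nat) (n_gt0 : (0 < n)%N)
  (x : 'rV[R]_n) (dmax alpha Lambda : R)
  (hdmax : 0 < dmax) (halpha : 0 < alpha) (hLambda : 0 < Lambda)
  (d : 'I_p -> 'rV[R]_n)
  (hPSS : Lambda_PSS d x alpha Lambda)
  (hnorm : forall i : 'I_p, enorm (d i) <= dmax * alpha) :
  cm d >= 1 / (dmax * Lambda).
Proof.
rewrite /cm; apply: lb_le_inf.
  exists (\big[Num.max/-1]_(i < p | d i != 0) cosang (d i) (const_mx 1)).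
  exists (const_mx 1) => //=.
  apply/negP => /eqP/matrixP/(_ ord0 (Ordinal n_gt0)); rewrite !mxE.
  by move/eqP; rewrite oner_eq0.
move=> _ [v /= hv <-].
set M := \big[Num.max/-1]_(i < p | d i != 0) cosang (d i) v.
have HM : forall i, d i != 0 -> cosang (d i) v <= M.
  move=> i hi; rewrite /M (bigD1 i) //=.
  by rewrite le_max lexx.
set s := enorm v.
have hs : 0 < s by apply: enorm_gt0.
set M' := Num.max M 0.
have hM'0 : 0 <= M' by rewrite le_max lexx orbT.
have hMM' : M <= M' by rewrite le_max lexx.
have [c [hc0 [hw hcs]]] : exists c : 'I_p -> R,
      (forall i, 0 <= c i) /\ (alpha / s) *: v = \sum_(i < p) c i *: d i /\
      \sum_(i < p) c i <= Lambda.
  apply: hPSS; rewrite enormZ ger0_norm; last by rewrite divr_ge0 // ltW.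
  by rewrite divfK // gt_eqF.
have e1 : dotp ((alpha / s) *: v) v = alpha * s.
  rewrite dotpZl -enorm_sq -/s; by field; rewrite gt_eqF.
have hK : 0 <= dmax * alpha * s by apply/ltW; rewrite !mulr_gt0.
have hterm : forall i, dotp (d i) v <= M' * (dmax * alpha * s).
  move=> i; have [->|hi] := eqVneq (d i) 0.
    by rewrite dotp0l mulr_ge0.
  have he := @enorm_gt0 _ _ _ hi.
  have -> : dotp (d i) v = cosang (d i) v * (enorm (d i) * s).
    by rewrite /cosang divfK // mulf_neq0 // gt_eqF.
  have := HM i hi; have := hnorm i => h1 h2.
  apply: (le_trans (y := M' * (enorm (d i) * s))).
    by apply: ler_wpM2r; [rewrite mulr_ge0 // ltW | exact: le_trans hMM'].
  by apply: ler_wpM2l => //; apply: ler_wpM2r => //; exact: ltW.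
have key : alpha * s <= Lambda * (M' * (dmax * alpha * s)).
  rewrite -e1 hw dotp_suml.
  apply: (le_trans (y := \sum_(i < p) c i * (M' * (dmax * alpha * s)))).
    apply: ler_sum => i _; rewrite dotpZl; apply: ler_wpM2l => //.
  by rewrite -mulr_suml; apply: ler_wpM2r => //; rewrite mulr_ge0.
have key2 : 1 <= Lambda * M' * dmax.
  have has : 0 < alpha * s by rewrite mulr_gt0.
  rewrite -(ler_pM2r has) mul1r; apply: (le_trans key); rewrite le_eqVlt; apply/orP; left; apply/eqP; ring.
have hM'M : M' = M.
  rewrite /M'; case: (leP M 0) => hM.
    by move: key2; rewrite /M' (max_idPr hM) mulr0 mul0r ler10.
  by [].
rewrite -hM'M ler_pdivrMr ?mulr_gt0 //.
by move: key2; rewrite mulrC mulrA [M' * _]mulrC.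
Qed.
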